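(* Let $P\subset\mathbb{R}^d$ be a $(0,1)$-polytope. Then, after a change of coordinates, $P=P_1\times\cdots\times P_s$ for some indecomposable $(0,1)$-polytopes $P_1,\ldots,P_s$.
   Context: A $(0,1)$-polytope is a polytope all of whose vertices lie in $\{0,1\}^d$. A lattice polytope is (Minkowski) indecomposable if it is not a single point and whenever it equals $P_1+P_2$ (Minkowski sum) with $P_1,P_2$ lattice polytopes, one of $P_1,P_2$ is a single point. $\times$ denotes direct product of polytopes; a Minkowski sum $P'+Q'$ of polytopes in $\mathbb{R}^d$ such that, for every coordinate $i$, the projection of $P'$ or of $Q'$ to the $i$-th coordinate is $\{0\}$, is regarded as the direct product of these polytopes (in the respective coordinate subspaces). *)

(* Defs.v *)
From HB Require Import structures.
From mathcomp Require Import all_boot all_order all_algebra all_fingroup.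
From mathcomp Require Import reals.
Set Implicit Arguments. Unset Strict Implicit. Unset Printing Implicit Defensive.
Import Order.TTheory GRing.Theory Num.Theory.
Local Open Scope ring_scope.

Section Defs.
Variables (R : realType) (d : nat).
Notation pt := 'rV[R]_d.

Definition conv (S : seq pt) : pt -> Prop :=
  fun x => exists lam : 'I_(size S) -> R,
    (forall i, 0 <= lam i) /\ \sum_i lam i = 1 /\
    x = \sum_i lam i *: S`_(val i).

Definition lattice_point (x : pt) : Prop :=
  forall i : 'I_d, exists z : int, x ord0 i = z%:~R.

Definition zero_one_point (x : pt) : Prop :=
  forall i : 'I_d, x ord0 i = 0 \/ x ord0 i = 1.

Definition lattice_polytope (P : pt -> Prop) : Prop :=
  exists S : seq pt, S <> [::] /\ (forall v, v \in S -> lattice_point v) /\ P = conv S.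

Definition zero_one_polytope (P : pt -> Prop) : Prop :=
  exists S : seq pt, S <> [::] /\ (forall v, v \in S -> zero_one_point v) /\ P = conv S.

Definition minkowski (P Q : pt -> Prop) : pt -> Prop :=
  fun x => exists p q, P p /\ Q q /\ x = p + q.

Definition is_single_point (P : pt -> Prop) : Prop :=
  exists v : pt, P = (fun x => x = v).

Definition indecomposable (P : pt -> Prop) : Prop :=
  lattice_polytope P /\ ~ is_single_point P /\
  forall P1 P2, lattice_polytope P1 -> lattice_polytope P2 ->
    P = minkowski P1 P2 -> is_single_point P1 \/ is_single_point P2.

Definition minkowski_list (Ps : seq (pt -> Prop)) : pt -> Prop :=
  foldr minkowski (fun x => x = 0) Ps.

(* Projection of P to the i-th coordinate is {0} (P nonempty in our uses). *)
Definition proj_zero (P : pt -> Prop) (i : 'I_d) : Prop :=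
  forall x, P x -> x ord0 i = 0.

(* Direct product P_1 x ... x P_s, in the paper's convention: the Minkowski
   sum of the P_j where, for every coordinate i, at most one P_j has
   projection to coordinate i different from {0}. *)
Definition is_direct_product (P : pt -> Prop) (Ps : seq (pt -> Prop)) : Prop :=
  (forall j k : nat, (j < size Ps)%N -> (k < size Ps)%N -> j <> k ->
     forall i : 'I_d, proj_zero (nth (fun _ => False) Ps j) i \/
                      proj_zero (nth (fun _ => False) Ps k) i) /\
  P = minkowski_list Ps.

(* Changes of coordinates of the cube: permutation of coordinates composed
   with reflections x_i |-> 1 - x_i. *)
Definition coord_change (s : 'S_d) (flip : 'I_d -> bool) (x : pt) : pt :=
  \row_i (if flip i then 1 - x ord0 (s i) else x ord0 (s i)).

Definition pt_image (f : pt -> pt) (P : pt -> Prop) : pt -> Prop :=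
  fun y => exists x, P x /\ y = f x.

End Defs.

(* Main.v *)
Require Import Defs.
From HB Require Import structures.
From mathcomp Require Import all_boot all_order all_algebra all_fingroup.
From mathcomp Require Import reals boolp.
From mathcomp Require Import lra zify.
Import Order.TTheory GRing.Theory Num.Theory.
Local Open Scope ring_scope.
Set Implicit Arguments. Unset Strict Implicit.

Definition convn (R : realType) (d : nat) (S : seq 'rV[R]_d) (x : 'rV[R]_d) : Prop :=
  exists lam : nat -> R, (forall k, (k < size S)%N -> 0 <= lam k) /\
    \sum_(0 <= k < size S) lam k = 1 /\ x = \sum_(0 <= k < size S) lam k *: S`_k.

Lemma convE (R : realType) (d : nat) (S : seq 'rV[R]_d) : conv S = convn S.
Proof.
apply: funext => x; apply: propext; split.
- move=> [lam [H0 [H1 Hx]]].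
  exists (fun k => if insub k is Some i then lam i else 0); split; [|split].
  + move=> k Hk; rewrite insubT /=; exact: H0.
  + by rewrite big_mkord -H1; apply: eq_bigr => i _; rewrite valK.
  + by rewrite big_mkord Hx; apply: eq_bigr => i _; rewrite valK.
- move=> [lam [H0 [H1 Hx]]].
  exists (fun i => lam (val i)); split; [|split].
  + by move=> i; apply: H0; exact: ltn_ord.
  + by rewrite -H1 big_mkord.
  + by rewrite Hx big_mkord.
Qed.

Lemma sum_entry (R : realType) (d : nat) (n : nat) (lam : nat -> R) (F : nat -> 'rV[R]_d) i :
  (\sum_(0 <= k < n) lam k *: F k) ord0 i = \sum_(0 <= k < n) lam k * F k ord0 i.
Proof. by rewrite summxE; apply: eq_bigr => k _; rewrite mxE. Qed.

Lemma convn_const (R : realType) (d : nat) (S : seq 'rV[R]_d) i c x :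
  (forall k, (k < size S)%N -> S`_k ord0 i = c) -> convn S x -> x ord0 i = c.
Proof.
move=> HS [lam [H0 [H1 ->]]]; rewrite sum_entry.
rewrite (eq_big_nat _ _ (F2 := fun k => lam k * c)); last first.
  by move=> k /andP [_ Hk]; rewrite HS.
by rewrite -mulr_suml H1 mul1r.
Qed.

Lemma convn_bound (R : realType) (d : nat) (S : seq 'rV[R]_d) i x :
  (forall k, (k < size S)%N -> 0 <= S`_k ord0 i <= 1) -> convn S x ->
  0 <= x ord0 i <= 1.
Proof.
move=> HS [lam [H0 [H1 ->]]]; rewrite sum_entry; apply/andP; split.
- rewrite big_nat; apply: sumr_ge0 => k /andP [_ Hk].
  by apply: mulr_ge0; [exact: H0 | case/andP: (HS k Hk)].
- rewrite -H1 !big_nat; apply: ler_sum => k /andP [_ Hk].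
  have /andP [a b] := HS k Hk; have := H0 k Hk.
  move=> hl; nra.
Qed.

Lemma sum_delta (V : nmodType) n k (F : nat -> V) : (k < n)%N ->
  \sum_(0 <= j < n) (if j == k then F j else 0) = F k.
Proof.
move=> Hk; rewrite big_mkord (bigD1 (Ordinal Hk)) //= eqxx big1 ?addr0 //.
move=> i Hi; rewrite ifN //; apply: contra Hi => /eqP Hik; apply/eqP/val_inj.
Qed.

Lemma convn_mem (R : realType) (d : nat) (S : seq 'rV[R]_d) k :
  (k < size S)%N -> convn S S`_k.
Proof.
move=> Hk; exists (fun j => if j == k then 1 else 0); split; [|split].
- by move=> j _; case: (j == k).
- exact: (sum_delta (fun _ => 1) Hk).
- rewrite -(sum_delta (fun j => S`_j) Hk); apply: eq_bigr => j _.
  by case: (j == k); rewrite ?scale1r ?scale0r.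
Qed.

Definition affine_form (R : realType) (d : nat) (f : 'rV[R]_d -> 'rV[R]_d) :=
  exists (a b : 'I_d -> R) (sg : 'I_d -> 'I_d),
    forall x, f x = \row_i (a i + b i * x ord0 (sg i)).

Lemma affine_sum (R : realType) (d : nat) (f : 'rV[R]_d -> 'rV[R]_d) S (lam : nat -> R) :
  affine_form f -> \sum_(0 <= k < size S) lam k = 1 ->
  f (\sum_(0 <= k < size S) lam k *: S`_k) =
  \sum_(0 <= k < size S) lam k *: (map f S)`_k.
Proof.
move=> [a [b [sg Hf]]] H1.
rewrite [RHS](eq_big_nat _ _ (F2 := fun k => lam k *: f S`_k)); last first.
  by move=> k /andP [_ Hk]; rewrite (nth_map 0).
apply/rowP => i; rewrite Hf mxE !sum_entry.
under [RHS]eq_bigr do rewrite Hf mxE mulrDr.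
rewrite big_split /= -mulr_suml H1 mul1r mulr_sumr; congr (_ + _).
by apply: eq_bigr => k _; rewrite mulrCA.
Qed.

Lemma image_convn (R : realType) (d : nat) (f : 'rV[R]_d -> 'rV[R]_d) S :
  affine_form f -> pt_image f (convn S) = convn (map f S).
Proof.
move=> Haf; apply: funext => x; apply: propext; split.
- move=> [y [[lam [H0 [H1 ->]]] ->]]; exists lam; rewrite size_map; split; [|split] => //.
  exact: affine_sum.
- move=> [lam []]; rewrite size_map => H0 [H1 Hx].
  exists (\sum_(0 <= k < size S) lam k *: S`_k); split.
    by exists lam.
  by rewrite Hx affine_sum.
Qed.

Lemma zero_one_image (R : realType) (d : nat) (f : 'rV[R]_d -> 'rV[R]_d) P :
  affine_form f -> (forall v, zero_one_point v -> zero_one_point (f v)) ->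
  zero_one_polytope P -> zero_one_polytope (pt_image f P).
Proof.
move=> Haf Hz [S [Sn [HS HP]]]; rewrite HP; exists (map f S); split; [|split].
- by apply/eqP; rewrite -size_eq0 size_map size_eq0; apply/eqP.
- by move=> v /mapP [u Hu ->]; apply: Hz; apply: HS.
- by rewrite !convE image_convn.
Qed.

Lemma zero_one_lattice (R : realType) (d : nat) (P : 'rV[R]_d -> Prop) :
  zero_one_polytope P -> lattice_polytope P.
Proof.
move=> [S [Sn [HS ->]]]; exists S; split; [|split] => //.
move=> v Hv i; case: (HS v Hv i) => ->; [by exists 0 | by exists 1].
Qed.

Lemma lattice_nonempty (R : realType) (d : nat) (P : 'rV[R]_d -> Prop) :
  lattice_polytope P -> exists x, P x.
Proof.
move=> [S [Sn [HS ->]]]; exists S`_0; rewrite convE; apply: convn_mem.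
by rewrite lt0n size_eq0; apply/eqP.
Qed.

Definition constc (R : realType) (d : nat) (P : 'rV[R]_d -> Prop) i :=
  forall x y, P x -> P y -> x ord0 i = y ord0 i.

Lemma nonconst_lattice (R : realType) (d : nat) (P : 'rV[R]_d -> Prop) i :
  lattice_polytope P -> ~ constc P i ->
  exists u u', P u /\ P u' /\ u ord0 i + 1 <= u' ord0 i.
Proof.
move=> [S [Sn [HS HP]]] Hnc; rewrite HP convE in Hnc *.
have S0 : (0 < size S)%N by rewrite lt0n size_eq0; apply/eqP.
case: (pselect (forall k, (k < size S)%N -> S`_k ord0 i = S`_0 ord0 i)) => H.
  by exfalso; apply: Hnc => x y Hx Hy; rewrite (convn_const H Hx) (convn_const H Hy).
have [k Hk] := (existsNP _).2 H.
have Hks : (k < size S)%N by apply: contra_notP Hk => /negP; rewrite -leqNgt => h1 h2; rewrite ltnNge h1 in h2.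
have Hne : S`_k ord0 i <> S`_0 ord0 i by move=> E; apply: Hk => _.
have [z0 E0] := HS _ (mem_nth 0 S0) i.
have [zk Ek] := HS _ (mem_nth 0 Hks) i.
rewrite E0 Ek in Hne.
have Hz : zk != z0 by apply/eqP => E; apply: Hne; rewrite E.
case/orP: (lt_total Hz) => Hlt.
- exists S`_k, S`_0; split; [exact: convn_mem | split; [exact: convn_mem|]].
  by rewrite E0 Ek -(intrD _ _ 1) ler_int lezD1.
- exists S`_0, S`_k; split; [exact: convn_mem | split; [exact: convn_mem|]].
  by rewrite E0 Ek -(intrD _ _ 1) ler_int lezD1.
Qed.

Lemma zero_one_bound (R : realType) (d : nat) (Q : 'rV[R]_d -> Prop) x i :
  zero_one_polytope Q -> Q x -> 0 <= x ord0 i <= 1.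
Proof.
move=> [S [Sn [HS HP]]]; rewrite HP convE => Hx; apply: convn_bound Hx => k Hk.
by case: (HS _ (mem_nth 0 Hk) i) => ->; rewrite ?lexx ?ler01.
Qed.

Lemma key (R : realType) (d : nat) (Q P1 P2 : 'rV[R]_d -> Prop) :
  zero_one_polytope Q -> lattice_polytope P1 -> lattice_polytope P2 ->
  Q = minkowski P1 P2 -> forall i, constc P1 i \/ constc P2 i.
Proof.
move=> HQ H1 H2 HM i.
case: (pselect (constc P1 i)) => h1; [by left|].
case: (pselect (constc P2 i)) => h2; [by right|].
exfalso.
have [u [u' [Hu [Hu' Hle]]]] := nonconst_lattice H1 h1.
have [w [w' [Hw [Hw' Hle']]]] := nonconst_lattice H2 h2.
have Q1 : Q (u + w) by rewrite HM; exists u, w.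
have Q2 : Q (u' + w') by rewrite HM; exists u', w'.
have /andP [a _] := zero_one_bound i HQ Q1.
have /andP [_ b] := zero_one_bound i HQ Q2.
rewrite !mxE in a b; clear -a b Hle Hle'; lra.
Qed.

Lemma not_point_nonconst (R : realType) (d : nat) (P : 'rV[R]_d -> Prop) :
  (exists x, P x) -> ~ is_single_point P -> exists i, ~ constc P i.
Proof.
move=> [p Hp] Hn; apply: contra_notP Hn => H; exists p.
apply: funext => x; apply: propext; split; last by move=> ->.
move=> Hx; apply/rowP => i; apply: contra_notP H => Hne; exists i => Hc.
by apply: Hne; apply: Hc.
Qed.

Definition projI (R : realType) (d : nat) (I : 'I_d -> bool) (x : 'rV[R]_d) : 'rV[R]_d :=
  \row_i (if I i then x ord0 i else 0).

Lemma projI_affine (R : realType) (d : nat) (I : 'I_d -> bool) :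
  affine_form (@projI R d I).
Proof.
exists (fun _ => 0), (fun i => if I i then 1 else 0), id => x.
by apply/rowP => i; rewrite !mxE; case: (I i); rewrite add0r ?mul1r ?mul0r.
Qed.

Definition nc1 (R : realType) (d : nat) (Q : 'rV[R]_d -> Prop) :=
  forall i, ~ (forall x, Q x -> x ord0 i = 1).

Lemma projI_props (R : realType) (d : nat) (Q : 'rV[R]_d -> Prop) (J : 'I_d -> bool) :
  zero_one_polytope Q -> nc1 Q ->
  [/\ zero_one_polytope (pt_image (projI J) Q), nc1 (pt_image (projI J) Q),
      (forall i, proj_zero Q i -> proj_zero (pt_image (projI J) Q) i) &
      (forall i, ~~ J i -> proj_zero (pt_image (projI J) Q) i)].
Proof.
move=> HQ Hnc; split.
- apply: zero_one_image HQ; first exact: projI_affine.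
  by move=> v Hv i; rewrite mxE; case: (J i) => //; left.
- move=> i H; have [x Hx] := lattice_nonempty (zero_one_lattice HQ).
  have := H _ (ex_intro _ x (conj Hx erefl)); rewrite mxE.
  case E: (J i); last by move=> /eqP; rewrite eq_sym oner_eq0.
  move=> _; apply: (Hnc i) => y Hy.
  by have := H _ (ex_intro _ y (conj Hy erefl)); rewrite mxE E.
- by move=> i Hz _ [x [Hx ->]]; rewrite mxE Hz //; case: (J i).
- by move=> i Hj _ [x [Hx ->]]; rewrite mxE (negbTE Hj).
Qed.

Lemma mink_comm (R : realType) (d : nat) (A B : 'rV[R]_d -> Prop) :
  minkowski A B = minkowski B A.
Proof.
apply: funext => x; apply: propext.
by split; move=> [p [q [Hp [Hq ->]]]]; exists q, p; rewrite addrC.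
Qed.

Lemma mink_assoc (R : realType) (d : nat) (A B C : 'rV[R]_d -> Prop) :
  minkowski A (minkowski B C) = minkowski (minkowski A B) C.
Proof.
apply: funext => x; apply: propext; split.
- move=> [a [y [Ha [[b [c [Hb [Hc ->]]]] ->]]]].
  by exists (a + b), c; rewrite addrA; split => //; exists a, b.
- move=> [y [c [[a [b [Ha [Hb ->]]]] [Hc ->]]]].
  by exists a, (b + c); rewrite addrA; split => //; split => //; exists b, c.
Qed.

Lemma mink0l (R : realType) (d : nat) (A : 'rV[R]_d -> Prop) :
  minkowski (fun x => x = 0) A = A.
Proof.
apply: funext => x; apply: propext; split.
- by move=> [p [q [-> [Hq ->]]]]; rewrite add0r.
- by move=> Hx; exists 0, x; rewrite add0r.
Qed.

Lemma ml_cat (R : realType) (d : nat) (A B : seq ('rV[R]_d -> Prop)) :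
  minkowski_list (A ++ B) = minkowski (minkowski_list A) (minkowski_list B).
Proof.
elim: A => [|a A IH] /=; first by rewrite mink0l.
by rewrite IH mink_assoc.
Qed.

Lemma witness (R : realType) (d : nat) (Q A B : 'rV[R]_d -> Prop) i :
  lattice_polytope A -> lattice_polytope B -> Q = minkowski A B ->
  ~ constc A i -> ~ proj_zero Q i.
Proof.
move=> HA HB HM Hc Hz.
have [u [u' [Hu [Hu' Hle]]]] := nonconst_lattice HA Hc.
have [q Hq] := lattice_nonempty HB.
have Q1 : Q (u + q) by rewrite HM; exists u, q.
have Q2 : Q (u' + q) by rewrite HM; exists u', q.
have := Hz _ Q1; have := Hz _ Q2; rewrite !mxE => a b.
clear -a b Hle; lra.
Qed.

Lemma split_mink (R : realType) (d : nat) (Q P1 P2 : 'rV[R]_d -> Prop) :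
  zero_one_polytope Q -> lattice_polytope P1 -> lattice_polytope P2 ->
  Q = minkowski P1 P2 ->
  let I := fun i => `[< ~ constc P1 i >] in
  Q = minkowski (pt_image (projI I) Q) (pt_image (projI (fun i => ~~ I i)) Q).
Proof.
move=> HQ H1 H2 HM I.
have Hk := key HQ H1 H2 HM.
apply: funext => z; apply: propext; split.
- move=> Hx; exists (projI I z), (projI (fun i => ~~ I i) z).
  split; [by exists z | split; [by exists z|]].
  by apply/rowP => i; rewrite !mxE; case: (I i); rewrite ?addr0 ?add0r.
- move=> [a [b [[x0 [Hx ->]] [[y [Hy ->]] ->]]]].
  have [p [q [Hp [Hq Ex]]]] : minkowski P1 P2 x0 by rewrite -HM.
  have [p' [q' [Hp' [Hq' Ey]]]] : minkowski P1 P2 y by rewrite -HM.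
  rewrite HM.
  exists p, q'; split => //; split => //.
  apply/rowP => i; rewrite !mxE /I Ex Ey !mxE.
  case: asboolP => h /=; rewrite ?addr0 ?add0r.
  + case: (Hk i) => // Hc; by rewrite (Hc q q').
  + have Hc : constc P1 i by apply: contra_notP h.
    by rewrite (Hc p' p).
Qed.

Definition suppn (R : realType) (d : nat) (Q : 'rV[R]_d -> Prop) :=
  #|[set i : 'I_d | `[< ~ proj_zero Q i >]]|.

Definition goodPs (R : realType) (d : nat) (Q : 'rV[R]_d -> Prop) (Ps : seq ('rV[R]_d -> Prop)) :=
  (forall j, (j < size Ps)%N ->
     zero_one_polytope (nth (fun _ => False) Ps j) /\
     indecomposable (nth (fun _ => False) Ps j)) /\
  (forall j, (j < size Ps)%N -> forall i, proj_zero Q i -> proj_zero (nth (fun _ => False) Ps j) i) /\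
  is_direct_product Q Ps.

Lemma suppn_lt (R : realType) (d : nat) (Q Q1 : 'rV[R]_d -> Prop) i :
  (forall i, proj_zero Q i -> proj_zero Q1 i) -> proj_zero Q1 i -> ~ proj_zero Q i ->
  (suppn Q1 < suppn Q)%N.
Proof.
move=> Hs H1 H; apply: proper_card; apply/properP; split.
  apply/subsetP => k; rewrite !inE => /asboolP h; apply/asboolP => h'; apply: h; exact: Hs.
exists i; rewrite !inE; first by apply/asboolP.
by apply/negP => /asboolP.
Qed.

Lemma step (R : realType) (d : nat) (Q : 'rV[R]_d -> Prop) :
  zero_one_polytope Q -> nc1 Q ->
  (forall Q' : 'rV[R]_d -> Prop, zero_one_polytope Q' -> nc1 Q' -> (suppn Q' < suppn Q)%N ->
     exists Ps, goodPs Q' Ps) ->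
  exists Ps, goodPs Q Ps.
Proof.
move=> HQ Hnc IH.
have HL := zero_one_lattice HQ.
case: (pselect (is_single_point Q)) => Hpt.
  case: Hpt => v Hv; exists [::]; split; [by []|split; [by []|]].
  split; first by [].
  rewrite Hv /=; suff -> : v = 0 by [].
  case: HQ => S [Sn [HS HP]].
  have S0 : (0 < size S)%N by rewrite lt0n size_eq0; apply/eqP.
  have HS0 : Q S`_0 by rewrite HP convE; apply: convn_mem.
  have Ev : S`_0 = v by rewrite Hv in HS0.
  apply/rowP => i; rewrite mxE.
  case: (HS _ (mem_nth 0 S0) i); rewrite Ev // => E1.
  by exfalso; apply: (Hnc i) => x; rewrite Hv => ->.
case: (pselect (indecomposable Q)) => Hind.
  exists [:: Q]; split; [|split; [|split]].
  - by case=> //= _; split.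
  - by case.
  - by case=> [|j] [|k] //=.
  - by rewrite /= mink_comm mink0l.
have [P1 [P2 [L1 [L2 [HM [N1 N2]]]]]] : exists P1 P2, lattice_polytope P1 /\
    lattice_polytope P2 /\ Q = minkowski P1 P2 /\ ~ is_single_point P1 /\
    ~ is_single_point P2.
  apply: contra_notP Hind => H; split; [exact: HL|split; [exact: Hpt|]].
  move=> P1 P2 l1 l2 e.
  case: (pselect (is_single_point P1)) => [?|n1]; [by left|].
  case: (pselect (is_single_point P2)) => [?|n2]; [by right|].
  by exfalso; apply: H; exists P1, P2.
have Hs := split_mink HQ L1 L2 HM.
set I := (fun i => `[< ~ constc P1 i >]) in Hs.
have Hk := key HQ L1 L2 HM.
have [Z1 N1' S1 C1] := projI_props I HQ Hnc.
have [Z2 N2' S2 C2] := projI_props (fun i => ~~ I i) HQ Hnc.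
set Q1 := pt_image (projI I) Q in Hs Z1 N1' S1 C1.
set Q2 := pt_image (projI (fun i => ~~ I i)) Q in Hs Z2 N2' S2 C2.
have [i1 Hi1] := not_point_nonconst (lattice_nonempty L2) N2.
have [i2 Hi2] := not_point_nonconst (lattice_nonempty L1) N1.
have Ci1 : constc P1 i1 by case: (Hk i1).
have lt1 : (suppn Q1 < suppn Q)%N.
  apply: (suppn_lt (i := i1) S1).
    by apply: C1; rewrite /I; apply/negP => /asboolP.
  by apply: (witness L2 L1 _ Hi1); rewrite HM mink_comm.
have lt2 : (suppn Q2 < suppn Q)%N.
  apply: (suppn_lt (i := i2) S2).
    by apply: C2; rewrite /I negbK; apply/asboolP.
  exact: (witness L1 L2 HM Hi2).
have [Ps1 [G1 [T1 [D1 E1]]]] := IH _ Z1 N1' lt1.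
have [Ps2 [G2 [T2 [D2 E2]]]] := IH _ Z2 N2' lt2.
exists (Ps1 ++ Ps2); split; [|split; [|split]].
- move=> j; rewrite size_cat nth_cat; case: (ltnP j (size Ps1)) => Hj Hj'.
    exact: G1 Hj.
  by apply: G2; lia.
- move=> j; rewrite size_cat nth_cat; case: (ltnP j (size Ps1)) => Hj Hj' i Hz.
    by apply: T1 => //; apply: S1.
  by apply: T2; [lia | apply: S2].
- move=> j k; rewrite size_cat !nth_cat => Hj Hk' Hjk i.
  case: (ltnP j (size Ps1)) => Hj1; case: (ltnP k (size Ps1)) => Hk1.
  + exact: D1.
  + case E: (I i).
      by right; apply: T2; [lia| apply: C2; rewrite E].
    by left; apply: T1 => //; apply: C1; rewrite E.
  + case E: (I i).
      by left; apply: T2; [lia| apply: C2; rewrite E].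
    by right; apply: T1 => //; apply: C1; rewrite E.
  + apply: D2; lia.
- by rewrite ml_cat -E1 -E2.
Qed.

Lemma main (R : realType) (d : nat) n (Q : 'rV[R]_d -> Prop) :
  zero_one_polytope Q -> nc1 Q -> (suppn Q < n)%N -> exists Ps, goodPs Q Ps.
Proof.
elim: n Q => [//|n IHn] Q HQ Hnc Hn.
apply: step HQ Hnc _ => Q' HQ' Hnc' Hlt; apply: IHn HQ' Hnc' _; lia.
Qed.

Lemma cc_affine (R : realType) (d : nat) (s : 'S_d) (flip : 'I_d -> bool) :
  affine_form (@coord_change R d s flip).
Proof.
exists (fun i => if flip i then 1 else 0), (fun i => if flip i then -1 else 1), s => x.
by apply/rowP => i; rewrite !mxE; case: (flip i); rewrite ?add0r ?mul1r ?mulN1r.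
Qed.

Unset Implicit Arguments.

Theorem lemma4p1 (R : realType) (d : nat) (P : 'rV[R]_d -> Prop) :
  zero_one_polytope P ->
  exists (s : 'S_d) (flip : 'I_d -> bool) (Ps : seq ('rV[R]_d -> Prop)),
    (forall j : nat, (j < size Ps)%N ->
       zero_one_polytope (nth (fun _ => False) Ps j) /\
       indecomposable (nth (fun _ => False) Ps j)) /\
    is_direct_product (pt_image (coord_change s flip) P) Ps.
Proof.
move=> HP.
pose flip := fun i : 'I_d => `[< forall x, P x -> x ord0 i = 1 >].
set Q := pt_image (coord_change 1 flip) P.
have HQ : zero_one_polytope Q.
  apply: zero_one_image HP; first exact: cc_affine.
  move=> v Hv i; rewrite mxE perm1; case: (flip i); case: (Hv i) => ->;
    rewrite ?subr0 ?subrr; by [left|right].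
have Hnc : nc1 Q.
  move=> i H; have [x Hx] := lattice_nonempty (zero_one_lattice HP).
  have := H _ (ex_intro _ x (conj Hx erefl)); rewrite mxE perm1 /flip.
  case: asboolP => h.
    by rewrite (h _ Hx) subrr => /eqP; rewrite eq_sym oner_eq0.
  move=> _; apply: h => y Hy.
  have := H _ (ex_intro _ y (conj Hy erefl)); rewrite mxE perm1 /flip.
  by case: asboolP => [h' _|_ ->] //; exact: h' _ Hy.
have [Ps [G [_ D]]] := main (n := (suppn Q).+1) HQ Hnc (ltnSn _).
by exists 1%g, flip, Ps.
Qed.
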